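(* Let $m>0$. For every fixed $k\geq0$, the functions $$\widetilde S^{\mathrm o}_k(y)=\frac{\sinh\big(k\arcsin\frac{y}{m+1}\big)}{\cos\big(\arcsin\frac{y}{m+1}\big)},\qquad\widetilde S^{\mathrm e}_k(y)=\frac{\cosh\big(k\arcsin\frac{y}{m+1}\big)}{\cos\big(\arcsin\frac{y}{m+1}\big)}$$ have Taylor expansions in the variable $y\in[-1,1]$ (about $y=0$) with nonnegative coefficients. *)

(* Defs.v *)
From Stdlib Require Import Reals.
From Coquelicot Require Import Coquelicot.
Open Scope R_scope.

Definition S_odd (m k y : R) : R :=
  sinh (k * asin (y / (m + 1))) / cos (asin (y / (m + 1))).

Definition S_even (m k y : R) : R :=
  cosh (k * asin (y / (m + 1))) / cos (asin (y / (m + 1))).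

Definition taylor_nonneg_on_unit (f : R -> R) : Prop :=
  exists a : nat -> R,
    (forall n, a n = Derive_n f n 0 / INR (Factorial.fact n)) /\
    (forall n, 0 <= a n) /\
    (forall y, -1 <= y <= 1 -> is_pseries a y (f y)).

(* Main.v *)
Require Import Defs.
From Stdlib Require Import Reals Lra.
From Coquelicot Require Import Coquelicot.
Open Scope R_scope.

Definition rho (k : R) (n : nat) : R := ((INR n + 1)^2 + k^2) / ((INR n + 2) * (INR n + 1)).

Fixpoint cpair (k d0 d1 : R) (n : nat) : R * R :=
  match n with
  | O => (d0, d1)
  | S n => (snd (cpair k d0 d1 n), rho k n * fst (cpair k d0 d1 n))
  end.

Definition cc k d0 d1 n := fst (cpair k d0 d1 n).

Lemma ccSS k d0 d1 n : cc k d0 d1 (S (S n)) = rho k n * cc k d0 d1 n.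
Proof. reflexivity. Qed.

Lemma rho_pos k n : 0 < rho k n.
Proof.
  unfold rho. pose proof (pos_INR n).
  apply Rdiv_lt_0_compat; nra.
Qed.

Definition G k (n : nat) := exp (k^2 - 2*k^2/(INR n + 2)).

Lemma rho_G k n : rho k n * G k n <= G k (S (S n)).
Proof.
  unfold G. rewrite !S_INR. set (t := INR n). assert (Ht : 0 <= t) by apply pos_INR.
  set (e := 4 * k^2 / ((t+2)*(t+4))).
  replace (k ^ 2 - 2 * k ^ 2 / (t + 1 + 1 + 2)) with ((k ^ 2 - 2 * k ^ 2 / (t + 2)) + e)
    by (unfold e; field; lra).
  rewrite exp_plus. rewrite (Rmult_comm (exp _)). apply Rmult_le_compat_r.
  { apply Rlt_le, exp_pos. }
  assert (He : 0 <= e) by (unfold e; apply Rmult_le_pos; [nra| apply Rlt_le, Rinv_0_lt_compat; nra]).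
  apply Rle_trans with (1 + e).
  2: { destruct (Req_dec e 0) as [E|E]. rewrite E, exp_0; lra. left; apply exp_ineq1; auto. }
  unfold rho, e. fold t. clearbody t e.
  assert (D : 1 + 4 * k ^ 2 / ((t + 2) * (t + 4)) - ((t + 1) ^ 2 + k ^ 2) / ((t + 2) * (t + 1))
            = ((t+1)*(t+4) + 3 * t * k^2) / ((t+1)*(t+2)*(t+4))) by (field; lra).
  assert (0 <= ((t+1)*(t+4) + 3 * t * k^2) / ((t+1)*(t+2)*(t+4))).
  { apply Rmult_le_pos. nra. apply Rlt_le, Rinv_0_lt_compat; nra. }
  lra.
Qed.

Lemma G_bounds k n : 1 <= G k n <= exp (k^2).
Proof.
  unfold G. pose proof (pos_INR n).
  assert (H0 : 0 <= 2 * k ^ 2 / (INR n + 2)) by (apply Rmult_le_pos; [nra| apply Rlt_le, Rinv_0_lt_compat; lra]).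
  assert (H1 : 2 * k ^ 2 / (INR n + 2) <= k^2).
  { apply Rmult_le_reg_r with (INR n + 2). lra. field_simplify; nra. }
  split.
  - rewrite <- exp_0. destruct (Req_dec (k ^ 2 - 2 * k ^ 2 / (INR n + 2)) 0) as [E|E].
    rewrite E; lra. left; apply exp_increasing; lra.
  - destruct (Req_dec (2 * k ^ 2 / (INR n + 2)) 0) as [E|E].
    rewrite E. right; f_equal; ring. left; apply exp_increasing; lra.
Qed.

Lemma cc_bound k d0 d1 : 0 <= d0 -> 0 <= d1 ->
  forall n, 0 <= cc k d0 d1 n <= (d0 + d1) * exp (k^2).
Proof.
  intros H0 H1.
  assert (forall n, (0 <= fst (cpair k d0 d1 n) <= (d0+d1) * G k n) /\
                    (0 <= snd (cpair k d0 d1 n) <= (d0+d1) * G k (S n))).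
  { induction n as [|n IH].
    - simpl. pose proof (G_bounds k 0). pose proof (G_bounds k 1). split; split; try lra; nra.
    - destruct IH as [[A1 A2] [B1 B2]]. simpl. split. lra.
      pose proof (rho_pos k n). pose proof (rho_G k n). pose proof (G_bounds k n). split. nra.
      apply Rle_trans with (rho k n * ((d0 + d1) * G k n)). apply Rmult_le_compat_l; lra. nra. }
  intros n. destruct (H n) as [[A1 A2] _]. unfold cc. split. lra.
  pose proof (G_bounds k n). nra.
Qed.

Lemma cc_radius k d0 d1 : 0 <= d0 -> 0 <= d1 -> forall s, 0 < s ->
  Rbar_le (Finite s) (CV_radius (fun n => cc k d0 d1 n / s ^ n)).
Proof.
  intros H0 H1 s Hs. destruct (CV_radius_bounded (fun n => cc k d0 d1 n / s ^ n)) as [Hub _].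
  apply Hub. exists ((d0 + d1) * exp (k^2)). intros n.
  replace (cc k d0 d1 n / s ^ n * s ^ n) with (cc k d0 d1 n).
  2: { field. apply pow_nonzero; lra. }
  destruct (cc_bound k d0 d1 H0 H1 n). rewrite Rabs_pos_eq; lra.
Qed.

Lemma cc_radius1 k d0 d1 : 0 <= d0 -> 0 <= d1 ->
  Rbar_le (Finite 1) (CV_radius (cc k d0 d1)).
Proof.
  intros H0 H1. rewrite (CV_radius_ext (cc k d0 d1) (fun n => cc k d0 d1 n / 1 ^ n)).
  apply cc_radius; lra. intros n. rewrite pow1. field.
Qed.

Lemma cc_in k d0 d1 x : 0 <= d0 -> 0 <= d1 -> Rabs x < 1 ->
  Rbar_lt (Finite (Rabs x)) (CV_radius (cc k d0 d1)).
Proof.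
  intros H0 H1 Hx. pose proof (cc_radius1 k d0 d1 H0 H1).
  destruct (CV_radius (cc k d0 d1)); simpl in *; lra.
Qed.

Lemma cc_coef k d0 d1 n :
  PS_plus (PS_plus (PS_incr_1 (PS_incr_1 (PS_derive (PS_derive (cc k d0 d1)))))
                   (PS_scal 3 (PS_incr_1 (PS_derive (cc k d0 d1))))) (PS_scal (1 + k^2) (cc k d0 d1)) n
  = PS_derive (PS_derive (cc k d0 d1)) n.
Proof.
  unfold PS_plus, PS_scal, PS_incr_1, PS_derive. cbn -[INR pow].
  destruct n as [|[|n]]; rewrite ?ccSS; unfold rho; rewrite ?S_INR; simpl INR.
  - unfold cc; cbn [cpair fst snd]; unfold rho; simpl INR; field.
  - unfold cc; cbn [cpair fst snd]; unfold rho; simpl INR; field.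
  - unfold cc; cbn [cpair fst snd]; unfold rho; rewrite ?S_INR. pose proof (pos_INR n). field. lra.
Qed.

Lemma cc_ode k d0 d1 x : 0 <= d0 -> 0 <= d1 -> Rabs x < 1 ->
  PSeries (PS_derive (PS_derive (cc k d0 d1))) x =
  x^2 * PSeries (PS_derive (PS_derive (cc k d0 d1))) x + 3 * x * PSeries (PS_derive (cc k d0 d1)) x
  + (1 + k^2) * PSeries (cc k d0 d1) x.
Proof.
  intros H0 H1 Hx.
  pose proof (cc_in k d0 d1 x H0 H1 Hx) as R0.
  assert (R1 : Rbar_lt (Rabs x) (CV_radius (PS_derive (cc k d0 d1)))) by (rewrite CV_radius_derive; exact R0).
  assert (R2 : Rbar_lt (Rabs x) (CV_radius (PS_derive (PS_derive (cc k d0 d1))))) by (rewrite !CV_radius_derive; exact R0).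
  pose proof (PSeries_correct _ _ (CV_radius_inside _ _ R0)) as P0.
  pose proof (PSeries_correct _ _ (CV_radius_inside _ _ R1)) as P1.
  pose proof (PSeries_correct _ _ (CV_radius_inside _ _ R2)) as P2.
  pose proof (is_pseries_incr_1 _ _ _ (is_pseries_incr_1 _ _ _ P2)) as Q2.
  pose proof (is_pseries_scal 3 _ _ _ (Rmult_comm _ _) (is_pseries_incr_1 _ _ _ P1)) as Q1.
  pose proof (is_pseries_scal (1+k^2) _ _ _ (Rmult_comm _ _) P0) as Q0.
  pose proof (is_pseries_plus _ _ _ _ _ (is_pseries_plus _ _ _ _ _ Q2 Q1) Q0) as Q.
  apply (is_pseries_ext _ _ _ _ (cc_coef k d0 d1)) in Q.
  apply is_pseries_unique in Q. rewrite Q at 1.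
  change (Rplus (Rplus (Rmult x (Rmult x (PSeries (PS_derive (PS_derive (cc k d0 d1))) x))) (Rmult 3 (Rmult x (PSeries (PS_derive (cc k d0 d1)) x)))) (Rmult (1 + k ^ 2) (PSeries (cc k d0 d1) x)) = x ^ 2 * PSeries (PS_derive (PS_derive (cc k d0 d1))) x + 3 * x * PSeries (PS_derive (cc k d0 d1)) x + (1 + k ^ 2) * PSeries (cc k d0 d1) x).
  ring.
Qed.

Ltac Rring := match goal with |- @eq _ ?a ?b => change (@eq R a b); ring end.

Lemma D_eq (f : R -> R) x l l' : is_derive f x l -> l = l' -> is_derive f x l'.
Proof. intros H <-; exact H. Qed.

Lemma D_mult (f g : R -> R) x df dg : is_derive f x df -> is_derive g x dg ->
  is_derive (fun t => f t * g t) x (df * g x + f x * dg).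
Proof. intros Hf Hg. exact (is_derive_mult f g x df dg Hf Hg (fun a b => Rmult_comm a b)). Qed.

Lemma D_minus (f g : R -> R) x df dg : is_derive f x df -> is_derive g x dg ->
  is_derive (fun t => f t - g t) x (df - dg).
Proof. intros Hf Hg. exact (is_derive_minus f g x df dg Hf Hg). Qed.

Lemma D_scal (f : R -> R) k x df : is_derive f x df -> is_derive (fun t => k * f t) x (k * df).
Proof. intros H. exact (is_derive_scal f x k df H). Qed.

Lemma D_sin_comp (f : R -> R) df t : is_derive f (sin t) df ->
  is_derive (fun u => f (sin u)) t (cos t * df).
Proof. intros H. exact (is_derive_comp f sin t df (cos t) H (is_derive_sin t)). Qed.

Lemma D_expk k t : is_derive (fun u => exp (k * u)) t (k * exp (k * t)).
Proof. auto_derive. auto. ring. Qed.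

Lemma const_on (f : R -> R) A : (forall t, -A < t < A -> is_derive f t 0) ->
  forall t, -A < t < A -> f t = f 0.
Proof.
  intros H t Ht.
  destruct (MVT_gen f 0 t (fun _ => 0)) as [c [_ Hc]].
  - intros x Hx. apply H. unfold Rmin, Rmax in Hx. destruct (Rle_dec 0 t); lra.
  - intros x Hx. apply continuity_pt_filterlim. apply (ex_derive_continuous f x).
    exists 0. apply H. unfold Rmin, Rmax in Hx. destruct (Rle_dec 0 t); lra.
  - lra.
Qed.

Lemma ode_unique (g g1 : R -> R) (k A : R) :
  (forall t, -A < t < A -> is_derive g t (g1 t)) ->
  (forall t, -A < t < A -> is_derive g1 t (k^2 * g t)) ->
  g 0 = 0 -> g1 0 = 0 -> forall t, -A < t < A -> g t = 0.
Proof.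
  intros Hg Hg1 g0 g10.
  assert (S0 : forall t, -A < t < A -> g1 t - k * g t = 0).
  { intros t Ht.
    pose proof (const_on (fun u => (g1 u - k * g u) * exp (k * u)) A) as C.
    simpl in C. rewrite g0, g10, Rmult_0_r, exp_0 in C.
    assert (E : (g1 t - k * g t) * exp (k * t) = 0).
    { rewrite C; [ring| |exact Ht]. intros u Hu.
      apply D_eq with ((k^2 * g u - k * g1 u) * exp (k*u) + (g1 u - k * g u) * (k * exp (k*u))).
      apply (D_mult (fun u => g1 u - k * g u) (fun u => exp (k*u))).
      apply (D_minus g1 (fun u => k * g u)). apply Hg1; auto.
      apply D_scal. apply Hg; auto.
      apply D_expk. Rring. }
    pose proof (exp_pos (k*t)). apply Rmult_integral in E. destruct E; lra. }
  intros t Ht.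
  pose proof (const_on (fun u => g u * exp (- k * u)) A) as C. simpl in C.
  rewrite g0, Rmult_0_l in C.
  assert (E : g t * exp (- k * t) = 0).
  { apply C; [|exact Ht]. intros u Hu.
    apply D_eq with (g1 u * exp (-k*u) + g u * (-k * exp (-k*u))).
    apply (D_mult g (fun u => exp (-k*u))). apply Hg; auto. apply D_expk.
    pose proof (S0 u Hu). replace (g1 u) with (k * g u) by lra. Rring. }
  pose proof (exp_pos (-k*t)). apply Rmult_integral in E. destruct E; lra.
Qed.

Lemma sin_lt1 t : - (PI/2) < t < PI/2 -> Rabs (sin t) < 1.
Proof.
  intros Ht. pose proof (cos_gt_0 t (proj1 Ht) (proj2 Ht)).
  pose proof (sin2_cos2 t). unfold Rsqr in *.
  apply Rabs_def1; nra.
Qed.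

Lemma dP k d0 d1 s : 0 <= d0 -> 0 <= d1 -> Rabs s < 1 ->
  is_derive (PSeries (cc k d0 d1)) s (PSeries (PS_derive (cc k d0 d1)) s).
Proof. intros. apply is_derive_PSeries. apply cc_in; auto. Qed.

Lemma dP1 k d0 d1 s : 0 <= d0 -> 0 <= d1 -> Rabs s < 1 ->
  is_derive (PSeries (PS_derive (cc k d0 d1))) s (PSeries (PS_derive (PS_derive (cc k d0 d1))) s).
Proof. intros. apply is_derive_PSeries. rewrite CV_radius_derive. apply cc_in; auto. Qed.

Lemma theta_main k d0 d1 (T T1 : R -> R) : 0 <= d0 -> 0 <= d1 ->
  (forall t, is_derive T t (T1 t)) -> (forall t, is_derive T1 t (k^2 * T t)) ->
  T 0 = d0 -> T1 0 = d1 ->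
  forall t, - (PI/2) < t < PI/2 -> PSeries (cc k d0 d1) (sin t) * cos t = T t.
Proof.
  intros H0 H1 HT HT1 T0 T10 t Ht.
  set (P := PSeries (cc k d0 d1)).
  set (P1 := PSeries (PS_derive (cc k d0 d1))).
  set (P2 := PSeries (PS_derive (PS_derive (cc k d0 d1)))).
  assert (E := ode_unique (fun u => P (sin u) * cos u - T u)
     (fun u => P1 (sin u) * (cos u * cos u) - P (sin u) * sin u - T1 u) k (PI/2)).
  simpl in E. apply Rminus_diag_uniq. apply E; auto.
  - intros u Hu. pose proof (sin_lt1 u Hu) as Hs.
    apply (D_minus (fun u => P (sin u) * cos u) T). 2: apply HT.
    apply D_eq with ((cos u * P1 (sin u)) * cos u + P (sin u) * (- sin u)).
    apply (D_mult (fun u => P (sin u)) cos). apply D_sin_comp. apply dP; auto.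
    apply is_derive_cos. Rring.
  - intros u Hu. pose proof (sin_lt1 u Hu) as Hs.
    apply D_eq with ((cos u * P2 (sin u)) * (cos u * cos u) + P1 (sin u) * (- sin u * cos u + cos u * - sin u)
       - ((cos u * P1 (sin u)) * sin u + P (sin u) * cos u) - k^2 * T u).
    apply (D_minus (fun u => P1 (sin u) * (cos u * cos u) - P (sin u) * sin u) T1). 2: apply HT1.
    apply (D_minus (fun u => P1 (sin u) * (cos u * cos u)) (fun u => P (sin u) * sin u)).
    apply (D_mult (fun u => P1 (sin u)) (fun u => cos u * cos u)). apply D_sin_comp. apply dP1; auto.
    apply (D_mult cos cos); apply is_derive_cos.
    apply (D_mult (fun u => P (sin u)) sin). apply D_sin_comp. apply dP; auto.
    apply is_derive_sin.
    pose proof (cc_ode k d0 d1 (sin u) H0 H1 Hs) as O. fold P P1 P2 in O.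
    pose proof (sin2_cos2 u) as SC. unfold Rsqr in SC.
    set (s := sin u) in *. set (c := cos u) in *.
    assert (D : c * P2 s * (c * c) + P1 s * (- s * c + c * - s) - (c * P1 s * s + P s * c) - k ^ 2 * T u
              - k ^ 2 * (P s * c - T u)
              = c * ((s * s + c * c - 1) * P2 s) + c * (P2 s - (s ^ 2 * P2 s + 3 * s * P1 s + (1 + k ^ 2) * P s))) by ring.
    rewrite SC, <- O in D. lra.
  - rewrite sin_0, cos_0. unfold P. rewrite PSeries_0, T0. unfold cc. simpl. ring.
  - rewrite sin_0, cos_0. unfold P, P1. rewrite !PSeries_0, T10. unfold PS_derive, cc. simpl. ring.
Qed.


Lemma pn (u:R) n : @pow_n (AbsRing.Ring R_AbsRing) u n = u ^ n.
Proof. induction n; simpl; [reflexivity| rewrite IHn; reflexivity]. Qed.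

Lemma pow_div_aux y s n : s <> 0 -> (y / s) ^ n = y ^ n / s ^ n.
Proof. intros Hs. unfold Rdiv. rewrite Rpow_mult_distr, pow_inv. reflexivity. Qed.

Lemma final_gen k d0 d1 m (T T1 f : R -> R) : 0 < m -> 0 <= d0 -> 0 <= d1 ->
  (forall t, is_derive T t (T1 t)) -> (forall t, is_derive T1 t (k^2 * T t)) ->
  T 0 = d0 -> T1 0 = d1 ->
  (forall y, f y = T (asin (y / (m + 1))) / cos (asin (y / (m + 1)))) ->
  taylor_nonneg_on_unit f.
Proof.
  intros Hm H0 H1 HT HT1 T0 T10 Hf.
  set (c := cc k d0 d1).
  set (a := fun n => c n / (m + 1) ^ n).
  assert (Hm1 : 0 < m + 1) by lra.
  assert (Id : forall y, Rabs y < m + 1 -> is_pseries a y (f y)).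
  { intros y Hy. set (x := y / (m + 1)).
    assert (Hx : Rabs x < 1).
    { unfold x. rewrite Rabs_div, (Rabs_pos_eq (m+1)) by lra.
      apply Rmult_lt_reg_r with (m+1). lra. field_simplify; lra. }
    assert (Hx' : -1 < x < 1) by (destruct (Rabs_def2 _ _ Hx); lra).
    pose proof (asin_bound_lt x Hx') as Hb.
    pose proof (theta_main k d0 d1 T T1 H0 H1 HT HT1 T0 T10 (asin x) Hb) as E.
    rewrite sin_asin in E by lra.
    pose proof (cos_gt_0 _ (proj1 Hb) (proj2 Hb)) as Hc.
    assert (Ep : PSeries c x = f y).
    { rewrite Hf. fold x. rewrite <- E. unfold c. field. lra. }
    rewrite <- Ep.
    pose proof (PSeries_correct _ _ (CV_radius_inside _ _ (cc_in k d0 d1 x H0 H1 Hx))) as P.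
    fold c in P. unfold is_pseries in *. revert P. apply is_series_ext.
    intros n. rewrite !pow_n_pow. unfold a, x. change (scal ?u ?v) with (u * v).
    rewrite pow_div_aux by lra. match goal with |- @eq _ ?u ?v => change (@eq R u v) end. transitivity (y^n * (c n / (m+1)^n)); [field; apply pow_nonzero; lra | f_equal; symmetry; apply pn]. }
  assert (Rad : Rbar_lt 0 (CV_radius a)).
  { pose proof (cc_radius k d0 d1 H0 H1 (m+1) Hm1) as Hr. fold c in Hr.
    unfold a. destruct (CV_radius (fun n => c n / (m + 1) ^ n)); simpl in *; lra. }
  exists a. split; [|split].
  - intros n. rewrite (Derive_n_ext_loc f (PSeries a)).
    + rewrite Derive_n_coef by exact Rad. field. apply INR_fact_neq_0.
    + exists (mkposreal 1 Rlt_0_1). intros y Hy.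
      unfold ball in Hy; simpl in Hy. unfold AbsRing_ball, abs, minus, plus, opp in Hy; simpl in Hy.
      rewrite Ropp_0, Rplus_0_r in Hy.
      symmetry. apply is_pseries_unique. apply Id. lra.
  - intros n. unfold a, c. destruct (cc_bound k d0 d1 H0 H1 n).
    apply Rmult_le_pos; auto. apply Rlt_le, Rinv_0_lt_compat, pow_lt; lra.
  - intros y Hy. apply Id. apply Rabs_def1; lra.
Qed.

Theorem mainTheorem7 (m k : R) (hm : 0 < m) (hk : 0 <= k) :
  taylor_nonneg_on_unit (S_odd m k) /\ taylor_nonneg_on_unit (S_even m k).
Proof.
  split.
  - apply (final_gen k 0 k m (fun t => sinh (k * t)) (fun t => k * cosh (k * t))); auto; try lra.
    + intros t. unfold sinh, cosh. auto_derive; auto. field.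
    + intros t. unfold sinh, cosh. auto_derive; auto. field.
    + unfold sinh. rewrite Rmult_0_r, Ropp_0, exp_0. field.
    + unfold cosh. rewrite Rmult_0_r, Ropp_0, exp_0. field.
  - apply (final_gen k 1 0 m (fun t => cosh (k * t)) (fun t => k * sinh (k * t))); auto; try lra.
    + intros t. unfold sinh, cosh. auto_derive; auto. field.
    + intros t. unfold sinh, cosh. auto_derive; auto. field.
    + unfold cosh. rewrite Rmult_0_r, Ropp_0, exp_0. field.
    + unfold sinh. rewrite Rmult_0_r, Ropp_0, exp_0. field.
Qed.
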